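(* Let $G=(V,E)$ be a connected undirected graph with $n\ge2$ nodes and let $0\le k<n$. There exists an initial state with exactly $k$ colored nodes for which the expected convergence time of the \textsc{Random Pick} process on $G$ equals $1$ if and only if $G$ has a vertex cover of size $k$.
   Context: An undirected graph is one with $(v,u)\in E\iff(u,v)\in E$. A vertex cover is a set $V'\subseteq V$ containing at least one endpoint of every edge. A state is a map $V\to\{b,r,u\}$ (blue, red, uncolored); colored means blue or red. \textsc{Random Pick} process: in each round every node with at least one neighbor picks a neighbor uniformly at random, independently; an uncolored node adopts the color of its pick if the pick is colored, and all other nodes keep their color. A state is stable if no uncolored node has a colored neighbor; the convergence time is the first round $t\ge0$ at which the state is stable. *)

(* Defs.v *)
From HB Require Import structures.
From mathcomp Require Import all_boot all_order all_algebra.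
From mathcomp Require Import all_classical all_reals.
From mathcomp Require Import ereal sequences.

Set Implicit Arguments.
Unset Strict Implicit.
Unset Printing Implicit Defensive.

Import Order.TTheory GRing.Theory Num.Theory.

Inductive color := Blue | Red | Uncolored.

Definition color_eqb (a b : color) : bool :=
  match a, b with
  | Blue, Blue | Red, Red | Uncolored, Uncolored => true
  | _, _ => false
  end.

Lemma color_eqP : Equality.axiom color_eqb.
Proof. by case; case; constructor. Qed.

HB.instance Definition _ := hasDecEq.Build color color_eqP.

Definition colored (c : color) : bool := c != Uncolored.

Section RandomPick.
Variable T : finType.
Variable e : rel T.

Definition state := {ffun T -> color}.

Definition vertex_cover (C : {set T}) : Prop :=
  forall x y, e x y -> (x \in C) || (y \in C).

Definition nbhd (v : T) : {set T} := [set w | e v w].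
Definition deg (v : T) : nat := #|nbhd v|.

Definition stable (s : state) : bool :=
  [forall v, forall w, ~~ [&& s v == Uncolored, e v w & colored (s w)]].

(* One round, given the picks f (f v = neighbour picked by v; for a node with
   no neighbour, which picks nothing, we use the convention f v = v). *)
Definition step (s : state) (f : {ffun T -> T}) : state :=
  [ffun v => if s v == Uncolored then s (f v) else s v].

Definition run (s0 : state) (fs : seq {ffun T -> T}) : state := foldl step s0 fs.

Variable R : realType.
Local Open Scope ring_scope.

(* probability of the pick vector f in one round: every node with at least one
   neighbour picks a neighbour uniformly at random, independently *)
Definition pick_prob (f : {ffun T -> T}) : R :=
  \prod_(v : T)
     (if deg v == 0%N then (if f v == v then 1 else 0)
      else (if e v (f v) then (deg v)%:R^-1 else 0)).

(* P(convergence time > t): the states at rounds 0..t are all unstable *)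
Definition prob_conv_time_gt (s0 : state) (t : nat) : R :=
  \sum_(fs : t.-tuple {ffun T -> T})
     (\prod_(f <- fs) pick_prob f) *
     (if [forall i : 'I_t.+1, ~~ stable (run s0 (take i fs))] then 1 else 0).

(* expected convergence time, E[T] = sum_{t >= 0} P(T > t), in [0, +oo] *)
Definition expected_conv_time (s0 : state) : \bar R :=
  (\sum_(0 <= t <oo) (prob_conv_time_gt s0 t)%:E)%E.

End RandomPick.

(* Main.v *)
Require Import Defs.
From HB Require Import structures.
From mathcomp Require Import all_boot all_order all_algebra.
From mathcomp Require Import all_classical all_reals.
From mathcomp Require Import ereal sequences.
From mathcomp Require Import lra zify.

Set Implicit Arguments.
Unset Strict Implicit.
Unset Printing Implicit Defensive.
Import Order.TTheory GRing.Theory Num.Theory.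

Section Aux.
Variable T : finType.
Variable e : rel T.

Lemma cross (A : {set T}) a b : a \in A -> b \notin A -> connect e a b ->
  exists u w, [/\ u \in A, w \notin A & e u w].
Proof.
move=> aA bA /connectP[p pth bE]; subst b.
elim: p a aA pth bA => [|c p IH] a aA /=; first by rewrite aA.
case/andP=> eac pth bA.
case cA: (c \in A); first exact: IH cA pth bA.
by exists a, c; rewrite cA.
Qed.

Hypothesis esym : symmetric e.
Hypothesis econ : forall x y : T, connect e x y.
Hypothesis card2 : (2 <= #|T|)%N.

Lemma other (v : T) : exists w, w != v.
Proof.
have : (0 < #|[set~ v]|)%N by rewrite cardsC1; case: #|T| card2 => [|[]].
by case/card_gt0P=> w; rewrite !inE => H; exists w.
Qed.

Lemma has_nb (v : T) : exists w, e v w.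
Proof.
have [w wv] := other v.
have wv' : w \notin [set v] by rewrite inE.
have [u [x [uv xv ux]]] := @cross [set v] v w (set11 v) wv' (econ v w).
by move: uv; rewrite inE => /eqP <-; exists x.
Qed.

Lemma deg_nz (v : T) : deg e v != 0%N.
Proof.
have [w vw] := has_nb v.
by rewrite /deg -lt0n; apply/card_gt0P; exists w; rewrite inE.
Qed.

Variable R : realType.
Local Open Scope ring_scope.

Lemma pick_prob_ge0 (f : {ffun T -> T}) : 0 <= pick_prob e R f.
Proof.
apply: prodr_ge0 => v _; case: ifP => _; first by case: ifP.
by case: ifP => // _; rewrite invr_ge0.
Qed.

Lemma pick_prob_nz (f : {ffun T -> T}) : pick_prob e R f != 0 -> forall v, e v (f v).
Proof.
move=> H v; apply/negPn/negP => nv; move: H; rewrite /pick_prob (bigD1 v) //=.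
by rewrite (negbTE (deg_nz v)) (negbTE nv) mul0r eqxx.
Qed.

Lemma pick_prob_gt0 (f : {ffun T -> T}) : (forall v, e v (f v)) -> 0 < pick_prob e R f.
Proof.
move=> H; apply: prodr_gt0 => v _; rewrite (negbTE (deg_nz v)) H.
by rewrite invr_gt0 ltr0n lt0n deg_nz.
Qed.

Lemma prob_ge0 s t : 0 <= prob_conv_time_gt e R s t.
Proof.
apply: sumr_ge0 => fs _; rewrite mulr_ge0 //; last by case: ifP.
by apply: prodr_ge0 => f _; exact: pick_prob_ge0.
Qed.

Lemma prob0 s : prob_conv_time_gt e R s 0 = if stable e s then 0 else 1.
Proof.
rewrite /prob_conv_time_gt (big_pred1 [tuple]); last first.
  by move=> fs /=; symmetry; apply/eqP/val_inj; apply: size0nil; rewrite size_tuple.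
rewrite big_nil mul1r.
have -> : [forall i : 'I_1, ~~ stable e (run s (take i [tuple]))] = ~~ stable e s.
  apply/forallP/idP => [/(_ ord0) //| H i]; by [].
by case: (stable e s).
Qed.

Lemma prob_stable s t : stable e s -> prob_conv_time_gt e R s t = 0.
Proof.
move=> st; apply: big1 => fs _.
have -> : [forall i : 'I_t.+1, ~~ stable e (run s (take i fs))] = false.
  by apply/negbTE/forallPn; exists ord0; rewrite /= take0 negbK.
by rewrite mulr0.
Qed.


Lemma prob_succ0 s t :
  (forall f : {ffun T -> T}, (forall v, e v (f v)) -> stable e (step s f)) ->
  prob_conv_time_gt e R s t.+1 = 0.
Proof.
move=> H; apply: big1 => fs _.
case/tupleP: fs => f fs /=; rewrite big_cons.
have [->|nz] := eqVneq (pick_prob e R f) 0; first by rewrite !mul0r.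
have -> : [forall i : 'I_t.+2, ~~ stable e (run s (take i (f :: fs)))] = false.
  apply/negbTE/forallPn; exists (Ordinal (isT : (1 < t.+2)%N)).
  by rewrite /= take0 negbK; apply: H; exact: pick_prob_nz.
by rewrite mulr0.
Qed.

Lemma prob1_gt0 s (f : {ffun T -> T}) : (forall v, e v (f v)) ->
  ~~ stable e s -> ~~ stable e (step s f) -> 0 < prob_conv_time_gt e R s 1.
Proof.
move=> ef ns ns1; rewrite /prob_conv_time_gt (bigD1 [tuple f]) //=.
have h2 : 0 <= \sum_(i : 1.-tuple {ffun T -> T} | i != [tuple f])
    (\prod_(f0 <- i) pick_prob e R f0) *
    (if [forall i0 : 'I_2, ~~ stable e (run s (take i0 i))] then 1 else 0).
  apply: sumr_ge0 => fs _; rewrite mulr_ge0 //; last by case: ifP.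
  by apply: prodr_ge0 => g _; exact: pick_prob_ge0.
have -> : [forall i0 : 'I_2, ~~ stable e (run s (take i0 [tuple f]))].
  by apply/forallP => -[[|[|//]] Hi].
rewrite big_seq1 mulr1.
have := pick_prob_gt0 ef; lra.
Qed.

End Aux.

Theorem mainTheorem15 (R : realType) (T : finType) (e : rel T) (k : nat) :
  symmetric e -> irreflexive e -> (forall x y : T, connect e x y) ->
  (2 <= #|T|)%N -> (k < #|T|)%N ->
  ((exists s0 : state T,
      #|[set v | colored (s0 v)]| = k /\
      expected_conv_time e R s0 = 1%E)
   <->
   (exists C : {set T}, #|C| = k /\ vertex_cover e C)).
Proof.
move=> esym irr econ c2 kn; split.
- case=> s0 [cardk E1]; exists [set v | colored (s0 v)]; split => //.
  move=> x y exy; apply/negPn/negP; rewrite !inE negb_or /colored !negbK.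
  case/andP=> /eqP xU /eqP yU.
  have [st|nst] := boolP (stable e s0).
    have E0 : expected_conv_time e R s0 = 0%E.
      by rewrite /expected_conv_time; apply: eseries0 => i _ _; rewrite prob_stable.
    by move: E1; rewrite E0 => -[] /eqP; rewrite eq_sym oner_eq0.
  pose nb v := odflt v [pick w | e v w].
  pose f := [ffun v => odflt (nb v)
     [pick w | (s0 v == Uncolored) && e v w && (s0 w == Uncolored)]].
  have ef : forall v, e v (f v).
    move=> v; rewrite ffunE; case: pickP => [w /andP[/andP[_ ->]] //| _].
    rewrite /nb; case: pickP => [w -> //| H].
    by have [w vw] := has_nb econ c2 v; rewrite H in vw.
  have s1x : step s0 f x = Uncolored.
    rewrite /step ffunE xU eqxx ffunE; case: pickP => [w /andP[_ /eqP] //| H].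
    by have := H y; rewrite xU exy yU eqxx.
  move/forallPn: (nst) => [a /forallPn [b]]; rewrite negbK => /and3P[_ _ cb].
  have s1b : step s0 f b = s0 b by rewrite /step ffunE (negbTE cb).
  have xA : x \in [set v | step s0 f v == Uncolored] by rewrite inE s1x.
  have bA : b \notin [set v | step s0 f v == Uncolored] by rewrite inE s1b.
  have [u [w [uA wA euw]]] := cross xA bA (econ x b).
  have ns1 : ~~ stable e (step s0 f).
    move: uA wA; rewrite !inE => uA wA.
    apply/negP => /forallP/(_ u)/forallP/(_ w).
    by rewrite uA euw /colored wA.
  have p1 := prob1_gt0 econ c2 R ef nst ns1.
  have := nneseries_lim_ge (u_ := fun t => (prob_conv_time_gt e R s0 t)%:E)
    (P := xpredT) (m := 0%N) 2 (fun n _ _ => prob_ge0 e R s0 n : (0 <= _%:E)%E).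
  rewrite -/(expected_conv_time e R s0) E1 big_mkord !big_ord_recl big_ord0 /=.
  rewrite prob0 (negbTE nst) adde0 -EFinD lee_fin.
  lra.
- case=> C [cC cov].
  have [v0 _] : exists v0 : T, v0 \in [set: T].
    by apply/card_gt0P; rewrite cardsT; exact: ltnW.
  have [w0 ev] := has_nb econ c2 v0.
  have [a aC] : exists a, a \in C by case/orP: (cov v0 w0 ev) => H; eauto.
  have [b bC] : exists b, b \notin C.
    have : (0 < #|~: C|)%N by move: (cardsC C); rewrite cC => H; lia.
    by case/card_gt0P => b; rewrite inE; exists b.
  pose s0 : state T := [ffun v => if v \in C then Blue else Uncolored].
  exists s0; split.
    rewrite -cC; apply: eq_card => v; rewrite inE ffunE.
    by case: (v \in C).
  have [u [w [uC wC euw]]] := cross aC bC (econ a b).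
  have nst : ~~ stable e s0.
    apply/negP => /forallP/(_ w)/forallP/(_ u).
    by rewrite !ffunE uC (negbTE wC) esym euw.
  rewrite /expected_conv_time (nneseries_split 0 1); last first.
    by move=> k0 _; rewrite lee_fin prob_ge0.
  rewrite add0n eseries0; last first.
    move=> i i1 _; case: i i1 => // i _; congr EFin; apply: prob_succ0 => // f ef.
    apply/forallP => v; apply/forallP => x; rewrite /step !ffunE.
    case vC: (v \in C) => //=.
    by have := cov v (f v) (ef v); rewrite vC /= => ->.
  by rewrite big_nat1 prob0 (negbTE nst) adde0.
Qed.
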